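(* Let $m\ge1$, $\tau_1\ge\tau_2\ge\dots\ge\tau_m>0$, $b_1,\dots,b_m>0$, and $\psi(u)=\frac12u^2+\sum_{j=1}^mb_j\sqrt{\tau_j-u^2}$ for $0\le u<\sqrt{\tau_m}$. Then: (1) $\psi$ has at most one critical point $u_0\in(0,\sqrt{\tau_m})$; if $u_0<u<\sqrt{\tau_m}$ then $\psi'(u)<0$ and $\psi''(u)<0$, while $\psi'(u)>0$ on $(0,u_0)$; and there is at most one $u_1\in(0,u_0)$ with $\psi''(u_1)=0$. (2) If $u_0$ exists, then $\psi'(u)=-u\int_{u_0}^u\sum_{j=1}^m\frac{b_js}{(\tau_j-s^2)^{3/2}}\,ds$ for all $0<u<\sqrt{\tau_m}$; if $u_0$ does not exist, then $|\psi'(u)|\ge u\int_0^u\sum_{j=1}^m\frac{b_js}{(\tau_j-s^2)^{3/2}}\,ds$ for all $0<u<\sqrt{\tau_m}$. (3) If $\sum_{j=1}^m b_j/\sqrt{\tau_j}\le\frac12$, then $\psi'(u)\ge\frac14u$ for all $0<u<\frac12\sqrt{\tau_m}$. If $\sum_{j=1}^m b_j/\sqrt{\tau_j}\ge2$, then $\psi'(u)\le-u$ for all $0<u<\sqrt{\tau_m}$. *)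

(* Defs.v *)
From Stdlib Require Import Reals Lra.
From Coquelicot Require Import Coquelicot.
Open Scope R_scope.

(* sum1 m f = f 1 + f 2 + ... + f m  (1-based, as in the paper) *)
Fixpoint sum1 (m : nat) (f : nat -> R) : R :=
  match m with
  | O => 0
  | S k => sum1 k f + f (S k)
  end.

Definition psi (m : nat) (tau b : nat -> R) (u : R) : R :=
  / 2 * u ^ 2 + sum1 m (fun j => b j * sqrt (tau j - u ^ 2)).

Definition kern (m : nat) (tau b : nat -> R) (s : R) : R :=
  sum1 m (fun j => b j * s / Rpower (tau j - s ^ 2) (3 / 2)).

(* Main.v *)
Require Import Defs.
From Stdlib Require Import Reals Lra Lia Ranalysis5.
From Coquelicot Require Import Coquelicot.
Open Scope R_scope.

Lemma sum1_ext m f f' : (forall j, (1 <= j <= m)%nat -> f j = f' j) -> sum1 m f = sum1 m f'.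
Proof. induction m; simpl; intros; auto. rewrite IHm; [|intros; apply H; lia]. rewrite H; auto; lia. Qed.

Lemma sum1_le m f f' : (forall j, (1 <= j <= m)%nat -> f j <= f' j) -> sum1 m f <= sum1 m f'.
Proof. induction m; simpl; intros; [lra|]. assert (sum1 m f <= sum1 m f') by (apply IHm; intros; apply H; lia).
 assert (f (S m) <= f' (S m)) by (apply H; lia). lra. Qed.

Lemma sum1_lt m f f' : (1 <= m)%nat -> (forall j, (1 <= j <= m)%nat -> f j < f' j) -> sum1 m f < sum1 m f'.
Proof. destruct m; [lia|]. intros _ H; simpl.
 assert (sum1 m f <= sum1 m f') by (apply sum1_le; intros; apply Rlt_le, H; lia).
 assert (f (S m) < f' (S m)) by (apply H; lia). lra. Qed.

Lemma sum1_scal m c f : sum1 m (fun j => c * f j) = c * sum1 m f.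
Proof. induction m; simpl; [ring|]. rewrite IHm; ring. Qed.

Lemma sum1_plus m f f' : sum1 m (fun j => f j + f' j) = sum1 m f + sum1 m f'.
Proof. induction m; simpl; [ring|]. rewrite IHm; ring. Qed.

Lemma sum1_derive m (f df : nat -> R -> R) x :
  (forall j, (1 <= j <= m)%nat -> is_derive (f j) x (df j x)) ->
  is_derive (fun y => sum1 m (fun j => f j y)) x (sum1 m (fun j => df j x)).
Proof. induction m; simpl; intros H.
 - apply (is_derive_const 0).
 - apply (is_derive_plus (fun y => sum1 m (fun j => f j y)) (f (S m))).
   + apply IHm; intros; apply H; lia.
   + apply H; lia.
Qed.

Lemma sum1_cont m (f : nat -> R -> R) x :
  (forall j, (1 <= j <= m)%nat -> continuous (f j) x) ->
  continuous (fun y => sum1 m (fun j => f j y)) x.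
Proof. induction m; simpl; intros H.
 - apply continuous_const.
 - apply (continuous_plus (fun y => sum1 m (fun j => f j y)) (f (S m))).
   + apply IHm; intros; apply H; lia.
   + apply H; lia.
Qed.

Lemma tau_ge m tau : (forall j : nat, (1 <= j)%nat -> (j < m)%nat -> tau (S j) <= tau j) ->
  forall j, (1 <= j <= m)%nat -> tau m <= tau j.
Proof. intros Hd. assert (forall d j, (j + d = m)%nat -> (1 <= j)%nat -> tau m <= tau j).
 { induction d; intros j Hj H1. - replace j with m by lia; lra.
   - assert (tau m <= tau (S j)) by (apply IHd; lia). assert (tau (S j) <= tau j) by (apply Hd; lia). lra. }
 intros j Hj. apply (H (m - j)%nat); lia. Qed.

Definition gg m (tau b : nat -> R) u := sum1 m (fun j => b j / sqrt (tau j - u^2)).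
Definition kk m (tau b : nat -> R) u := sum1 m (fun j => b j * u / ((tau j - u^2) * sqrt (tau j - u^2))).
Definition hh m (tau b : nat -> R) u := sum1 m (fun j => b j / sqrt (tau j - u^2) + b j * u^2 / ((tau j - u^2) * sqrt (tau j - u^2))).

Lemma d_psi_term t c u : 0 < t - u^2 -> is_derive (fun u => c * sqrt (t - u^2)) u (- (c * u / sqrt (t - u^2))).
Proof. intros. assert (0 < sqrt (t - u^2)) by (apply sqrt_lt_R0; lra).
 auto_derive; (try replace (t + - (u * (u * 1))) with (t - u^2) by ring). lra. field. lra. Qed.

Lemma d_g_term t c u : 0 < t - u^2 -> is_derive (fun u => c / sqrt (t - u^2)) u (c * u / ((t - u^2) * sqrt (t - u^2))).
Proof. intros. assert (0 < sqrt (t - u^2)) by (apply sqrt_lt_R0; lra).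
 auto_derive; (try replace (t + - (u * (u * 1))) with (t - u^2) by ring). split; [lra|]. split; auto. lra.
 assert (E : t - u^2 = sqrt (t - u^2) * sqrt (t - u^2)) by (rewrite sqrt_sqrt; lra).
 set (s := sqrt (t - u^2)) in *. rewrite E. field. lra. Qed.

Lemma c_k_term t c u : 0 < t - u^2 -> continuous (fun u => c * u / ((t - u^2) * sqrt (t - u^2))) u.
Proof. intros. assert (0 < sqrt (t - u^2)) by (apply sqrt_lt_R0; lra).
 apply (@ex_derive_continuous R_AbsRing R_NormedModule). auto_derive; (try replace (t + - (u * (u * 1))) with (t - u^2) by ring).
 split; [lra|]. split; auto. apply Rgt_not_eq. apply Rmult_lt_0_compat; lra. Qed.

Definition HH m (tau b : nat -> R) := (1 <= m)%nat /\ 0 < tau m /\ (forall j, (1<=j<=m)%nat -> tau m <= tau j /\ 0 < b j).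

Lemma L_sq t u : 0 < t -> Rabs u < sqrt t -> u^2 < t.
Proof. intros Ht Hu. rewrite <- (sqrt_sqrt t) by lra. rewrite <- (pow2_abs u).
 assert (0 <= Rabs u) by apply Rabs_pos. nra. Qed.

Lemma L_pos m tau b u : HH m tau b -> u^2 < tau m -> forall j, (1<=j<=m)%nat -> 0 < tau j - u^2.
Proof. intros [_ [_ H]] Hu j Hj. destruct (H j Hj). lra. Qed.

Lemma L_loc t u : Rabs u < t -> locally u (fun x => Rabs x < t).
Proof. intros Hu. assert (Hp : 0 < t - Rabs u) by lra. exists (mkposreal _ Hp). intros y Hy.
 unfold ball in Hy; simpl in Hy; unfold AbsRing_ball, abs, minus, plus, opp in Hy; simpl in Hy.
 assert (Hy2 : Rabs (y - u) < t - Rabs u) by exact Hy. clear Hy. replace y with (u + (y - u)) by ring. pose proof (Rabs_triang u (y - u)). lra. Qed.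

Lemma L_dpsi m tau b u : HH m tau b -> u^2 < tau m -> is_derive (psi m tau b) u (u - u * gg m tau b u).
Proof. intros H Hu. unfold psi.
 assert (E : u - u * gg m tau b u = u + sum1 m (fun j => - (b j * u / sqrt (tau j - u^2)))).
 { rewrite (sum1_ext m _ (fun j => (-u) * (b j / sqrt (tau j - u^2)))).
   rewrite sum1_scal. unfold gg. simpl. field. intros j Hj. field. apply Rgt_not_eq, sqrt_lt_R0. apply (L_pos m tau b u H Hu j Hj). }
 rewrite E. apply (is_derive_plus (fun u => / 2 * u ^ 2)).
 - auto_derive; [auto | simpl; field].
 - apply (sum1_derive m (fun j u => b j * sqrt (tau j - u^2)) (fun j u => - (b j * u / sqrt (tau j - u^2)))).
   intros j Hj. apply d_psi_term. apply (L_pos m tau b u H Hu j Hj).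
Qed.

Lemma L_dg m tau b u : HH m tau b -> u^2 < tau m -> is_derive (gg m tau b) u (kk m tau b u).
Proof. intros H Hu. unfold gg, kk.
 apply (sum1_derive m (fun j u => b j / sqrt (tau j - u^2)) (fun j u => b j * u / ((tau j - u^2) * sqrt (tau j - u^2)))).
 intros j Hj. apply d_g_term. apply (L_pos m tau b u H Hu j Hj).
Qed.

Lemma L_Dpsi m tau b u : HH m tau b -> Rabs u < sqrt (tau m) -> Derive (psi m tau b) u = u - u * gg m tau b u.
Proof. intros H Hu. apply is_derive_unique, L_dpsi; auto. apply L_sq; auto. apply H. Qed.

Lemma L_hh m tau b u : HH m tau b -> u^2 < tau m -> gg m tau b u + u * kk m tau b u = hh m tau b u.
Proof. intros H Hu. unfold gg, kk, hh. rewrite <- sum1_scal, <- sum1_plus. apply sum1_ext.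
 intros j Hj. pose proof (L_pos m tau b u H Hu j Hj). assert (0 < sqrt (tau j - u^2)) by (apply sqrt_lt_R0; lra).
 field. split; lra. Qed.

Lemma L_DDpsi m tau b u : HH m tau b -> Rabs u < sqrt (tau m) -> Derive (Derive (psi m tau b)) u = 1 - hh m tau b u.
Proof. intros H Hu. assert (Ht : 0 < tau m) by apply H.
 rewrite (Derive_ext_loc _ (fun t => t - t * gg m tau b t)).
 2:{ apply (filter_imp (fun t => Rabs t < sqrt (tau m))). intros; apply L_Dpsi; auto. apply L_loc; auto. }
 apply is_derive_unique. rewrite <- L_hh; auto. 2: apply L_sq; auto.
 pose proof (L_dg m tau b u H (L_sq _ _ Ht Hu)) as Hg.
 assert (Hm : is_derive (fun t => t * gg m tau b t) u (1 * gg m tau b u + u * kk m tau b u)).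
 { apply (is_derive_mult (fun t => t) (gg m tau b) u 1 (kk m tau b u)); auto.
   apply (is_derive_id (K := R_AbsRing)). intros; apply Rmult_comm. }
 replace (1 - (gg m tau b u + u * kk m tau b u)) with (1 - (1 * gg m tau b u + u * kk m tau b u)) by ring.
 apply (is_derive_minus (fun t => t) (fun t => t * gg m tau b t)); auto.
 apply (is_derive_id (K := R_AbsRing)).
Qed.

Lemma L_gmono m tau b a c : HH m tau b -> 0 <= a < c -> c^2 < tau m -> gg m tau b a < gg m tau b c.
Proof. intros H Ha Hc. unfold gg. apply sum1_lt. apply H. intros j Hj.
 assert (a^2 < c^2) by nra. pose proof (L_pos m tau b c H Hc j Hj). destruct H as [_ [_ H]]. destruct (H j Hj).
 assert (0 < sqrt (tau j - c^2)) by (apply sqrt_lt_R0; lra).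
 assert (sqrt (tau j - c^2) < sqrt (tau j - a^2)) by (apply sqrt_lt_1_alt; lra).
 unfold Rdiv. apply Rmult_lt_compat_l; auto. apply Rinv_lt_contravar; auto. nra. Qed.

Lemma L_hmono m tau b a c : HH m tau b -> 0 <= a < c -> c^2 < tau m -> hh m tau b a < hh m tau b c.
Proof. intros H Ha Hc. unfold hh. apply sum1_lt. apply H. intros j Hj.
 assert (a^2 < c^2) by nra. assert (0 <= a^2) by nra. pose proof (L_pos m tau b c H Hc j Hj). destruct H as [_ [_ H]]. destruct (H j Hj).
 assert (0 < sqrt (tau j - c^2)) by (apply sqrt_lt_R0; lra).
 assert (sqrt (tau j - c^2) < sqrt (tau j - a^2)) by (apply sqrt_lt_1_alt; lra).
 assert (b j / sqrt (tau j - a ^ 2) < b j / sqrt (tau j - c ^ 2)).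
 { unfold Rdiv. apply Rmult_lt_compat_l; auto. apply Rinv_lt_contravar; auto. nra. }
 assert (/ ((tau j - a^2) * sqrt (tau j - a^2)) < / ((tau j - c^2) * sqrt (tau j - c^2))).
 { apply Rinv_lt_contravar. apply Rmult_lt_0_compat; apply Rmult_lt_0_compat; lra.
   apply Rmult_le_0_lt_compat; lra. }
 assert (0 < / ((tau j - a^2) * sqrt (tau j - a^2))).
 { apply Rinv_0_lt_compat, Rmult_lt_0_compat; lra. }
 assert (a^2 * / ((tau j - a^2) * sqrt (tau j - a^2)) <= c^2 * / ((tau j - c^2) * sqrt (tau j - c^2))).
 { apply Rmult_le_compat; lra. }
 unfold Rdiv in *. assert (b j * (a^2 * / ((tau j - a^2) * sqrt (tau j - a^2))) <= b j * (c^2 * / ((tau j - c^2) * sqrt (tau j - c^2)))).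
 { apply Rmult_le_compat_l; lra. }
 rewrite !Rmult_assoc. lra. Qed.

Lemma L_kpos m tau b u : HH m tau b -> 0 < u -> u^2 < tau m -> 0 < kk m tau b u.
Proof. intros H Hu Hc. unfold kk. replace 0 with (sum1 m (fun _ => 0)).
 2:{ clear. induction m; simpl; auto; lra. }
 apply sum1_lt. apply H. intros j Hj. pose proof (L_pos m tau b u H Hc j Hj). destruct H as [_ [_ H]]. destruct (H j Hj).
 assert (0 < sqrt (tau j - u^2)) by (apply sqrt_lt_R0; lra).
 unfold Rdiv. apply Rmult_lt_0_compat. nra. apply Rinv_0_lt_compat, Rmult_lt_0_compat; lra. Qed.

Lemma L_kern m tau b u : HH m tau b -> u^2 < tau m -> kern m tau b u = kk m tau b u.
Proof. intros H Hu. unfold kern, kk. apply sum1_ext. intros j Hj. pose proof (L_pos m tau b u H Hu j Hj).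
 replace (3/2) with (1 + /2) by field. rewrite Rpower_plus, Rpower_1, Rpower_sqrt; auto. Qed.

Lemma L_int m tau b a c : HH m tau b -> 0 <= a -> 0 <= c -> a < sqrt (tau m) -> c < sqrt (tau m) ->
  RInt (kern m tau b) a c = gg m tau b c - gg m tau b a.
Proof. intros H Ha Hc Ha' Hc'. assert (Ht : 0 < tau m) by apply H.
 assert (Hx : forall x, Rmin a c <= x <= Rmax a c -> Rabs x < sqrt (tau m)).
 { intros x Hx. assert (0 <= x). { pose proof (Rmin_glb_lt). unfold Rmin in Hx; destruct (Rle_dec a c); lra. }
   rewrite Rabs_pos_eq; auto. unfold Rmax in Hx; destruct (Rle_dec a c); lra. }
 apply is_RInt_unique.
 replace (gg m tau b c - gg m tau b a) with (minus (gg m tau b c) (gg m tau b a)) by reflexivity.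
 apply (@is_RInt_derive R_CompleteNormedModule (gg m tau b) (kern m tau b)).
 - intros x Hx'. rewrite (L_kern m tau b x H (L_sq _ _ Ht (Hx x Hx'))). apply L_dg; auto. apply L_sq; auto.
 - intros x Hx'. apply (continuous_ext_loc _ (kk m tau b)).
   + apply (filter_imp (fun t => Rabs t < sqrt (tau m))). intros; symmetry; apply L_kern; auto. apply L_sq; auto.
     apply L_loc; auto.
   + unfold kk. apply (sum1_cont m (fun j u => b j * u / ((tau j - u^2) * sqrt (tau j - u^2)))).
     intros j Hj. apply c_k_term. apply (L_pos m tau b x H); auto. apply L_sq; auto.
Qed.

Lemma sum1_ge_last m f : (1 <= m)%nat -> (forall j, (1 <= j <= m)%nat -> 0 <= f j) -> f m <= sum1 m f.
Proof. destruct m; [lia|]. intros _ H. simpl.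
 assert (sum1 m (fun _ => 0) <= sum1 m f) by (apply sum1_le; intros; apply H; lia).
 replace (sum1 m (fun _ => 0)) with 0 in H0 by (clear; induction m; simpl; auto; lra). lra. Qed.

Lemma L_exists m tau b u : HH m tau b -> 0 <= u < sqrt (tau m) -> gg m tau b u < 1 ->
  exists z, 0 < z < sqrt (tau m) /\ gg m tau b z = 1.
Proof. intros H [Hu0 Hu] Hg. pose proof H as [Hm [Ht Hj]]. destruct (Hj m) as [_ Hbm]; [lia|].
 assert (Hu2 : u^2 < tau m) by (apply L_sq; auto; rewrite Rabs_pos_eq; auto).
 assert (0 <= u^2) by nra. set (eps := Rmin (b m ^ 2 / 4) ((tau m - u^2) / 2)).
 assert (He1 : eps <= b m ^ 2 / 4) by apply Rmin_l.
 assert (He2 : eps <= (tau m - u^2) / 2) by apply Rmin_r.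
 assert (He0 : 0 < eps) by (apply Rmin_glb_lt; nra).
 set (v := sqrt (tau m - eps)).
 assert (Hv0 : 0 < v) by (apply sqrt_lt_R0; lra).
 assert (Hv2 : v^2 = tau m - eps) by (unfold v; simpl; rewrite Rmult_1_r, sqrt_sqrt; lra).
 assert (HvT : v < sqrt (tau m)) by (apply sqrt_lt_1_alt; lra).
 assert (Huv2 : u^2 < v^2) by lra. assert (Huv : u < v) by nra.
 assert (Hgv : 2 <= gg m tau b v).
 { unfold gg. eapply Rle_trans; [|apply sum1_ge_last; auto].
   - rewrite Hv2. replace (tau m - (tau m - eps)) with eps by ring.
     assert (Hs0 : 0 < sqrt eps) by (apply sqrt_lt_R0; lra).
     assert (Hs : sqrt eps <= b m / 2).
     { rewrite <- (sqrt_square (b m / 2)) by lra. apply sqrt_le_1_alt. nra. }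
     unfold Rdiv. apply (Rmult_le_reg_r (sqrt eps)); auto. rewrite Rmult_assoc, Rinv_l; lra.
   - intros j Hj'. pose proof (L_pos m tau b v H ltac:(lra) j Hj'). destruct (Hj j Hj').
     unfold Rdiv. apply Rmult_le_pos; [lra|]. apply Rlt_le, Rinv_0_lt_compat, sqrt_lt_R0; lra. }
 destruct (IVT_interv (fun x => gg m tau b x - 1) u v) as [z [Hz1 Hz2]]; auto; try lra.
 - intros a Ha. apply continuity_pt_filterlim. change (continuous (fun x => gg m tau b x - 1) a). apply (@ex_derive_continuous R_AbsRing R_NormedModule).
   exists (kk m tau b a - 0). apply (is_derive_minus (K := R_AbsRing) (V := R_NormedModule) (gg m tau b) (fun _ => 1)).
   + apply L_dg; auto. apply L_sq; auto. rewrite Rabs_pos_eq; lra.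
   + apply (is_derive_const (K := R_AbsRing) (V := R_NormedModule)).
 - exists z. assert (z <> u) by (intro; subst; lra). split; [lra|lra].
Qed.

Theorem lemma7p1 (m : nat) (tau b : nat -> R)
  (Hm : (1 <= m)%nat)
  (Htau_dec : forall j : nat, (1 <= j)%nat -> (j < m)%nat -> tau (S j) <= tau j)
  (Htau_pos : 0 < tau m)
  (Hb : forall j : nat, (1 <= j)%nat -> (j <= m)%nat -> 0 < b j) :
  let psi' := Derive (psi m tau b) in
  let psi'' := Derive (Derive (psi m tau b)) in
  let crit := fun u0 => 0 < u0 < sqrt (tau m) /\ psi' u0 = 0 in
  (* (1) *)
  ((forall u0 u0', crit u0 -> crit u0' -> u0 = u0') /\
   (forall u0, crit u0 ->
      (forall u, u0 < u < sqrt (tau m) -> psi' u < 0 /\ psi'' u < 0) /\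
      (forall u, 0 < u < u0 -> psi' u > 0) /\
      (forall u1 u1', 0 < u1 < u0 -> psi'' u1 = 0 ->
                      0 < u1' < u0 -> psi'' u1' = 0 -> u1 = u1'))) /\
  (* (2) *)
  ((forall u0, crit u0 ->
      forall u, 0 < u < sqrt (tau m) ->
        psi' u = - u * RInt (kern m tau b) u0 u) /\
   ((~ exists u0, crit u0) ->
      forall u, 0 < u < sqrt (tau m) ->
        Rabs (psi' u) >= u * RInt (kern m tau b) 0 u)) /\
  (* (3) *)
  ((sum1 m (fun j => b j / sqrt (tau j)) <= / 2 ->
      forall u, 0 < u < / 2 * sqrt (tau m) -> psi' u >= / 4 * u) /\
   (sum1 m (fun j => b j / sqrt (tau j)) >= 2 ->
      forall u, 0 < u < sqrt (tau m) -> psi' u <= - u)).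
Proof.
 cbv zeta.
 assert (H : HH m tau b).
 { split; auto. split; auto. intros j Hj. split. apply tau_ge; auto. apply Hb; lia. }
 set (T := sqrt (tau m)).
 assert (HT : 0 < T) by (apply sqrt_lt_R0; auto).
 assert (HTT : T * T = tau m) by (apply sqrt_sqrt; lra).
 assert (DP : forall u, 0 < u < T -> Derive (psi m tau b) u = u - u * gg m tau b u).
 { intros u Hu. apply L_Dpsi; auto. rewrite Rabs_pos_eq; unfold T in *; lra. }
 assert (DDP : forall u, 0 < u < T -> Derive (Derive (psi m tau b)) u = 1 - hh m tau b u).
 { intros u Hu. apply L_DDpsi; auto. rewrite Rabs_pos_eq; unfold T in *; lra. }
 assert (SQ : forall u, 0 <= u < T -> u^2 < tau m).
 { intros u Hu. apply L_sq; auto. rewrite Rabs_pos_eq; unfold T in *; lra. }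
 assert (CG : forall u0, (0 < u0 < T /\ Derive (psi m tau b) u0 = 0) -> gg m tau b u0 = 1).
 { intros u0 [Hu0 Hd]. rewrite DP in Hd; auto.
   assert (u0 * (1 - gg m tau b u0) = 0) by lra. apply Rmult_integral in H0. destruct H0; lra. }
 assert (GM : forall a c, 0 <= a < c -> c < T -> gg m tau b a < gg m tau b c).
 { intros a c Ha Hc. apply L_gmono; auto. apply SQ; lra. }
 assert (HM : forall a c, 0 <= a < c -> c < T -> hh m tau b a < hh m tau b c).
 { intros a c Ha Hc. apply L_hmono; auto. apply SQ; lra. }
 fold T.
 split; [split|split; [split|split]].
 - intros u0 u0' C1 C2. pose proof (CG _ C1). pose proof (CG _ C2).
   destruct C1 as [[? ?] _]; destruct C2 as [[? ?] _].
   destruct (Rtotal_order u0 u0') as [Hl|[Hl|Hl]]; auto.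
   + pose proof (GM u0 u0'); lra.
   + pose proof (GM u0' u0); lra.
 - intros u0 C. pose proof (CG _ C) as G0. destruct C as [[Hu0 Hu0'] _]. split; [|split].
   + intros u [Hu Hu']. rewrite DP, DDP by lra. pose proof (GM u0 u) as G1.
     pose proof (L_kpos m tau b u H ltac:(lra) (SQ u ltac:(lra))).
     rewrite <- L_hh; auto. 2: apply SQ; lra. split; nra.
   + intros u [Hu Hu']. rewrite DP by lra. pose proof (GM u u0). nra.
   + intros u1 u1' [? ?] Hz [? ?] Hz'. rewrite DDP in Hz, Hz' by lra.
     destruct (Rtotal_order u1 u1') as [Hl|[Hl|Hl]]; auto.
     * pose proof (HM u1 u1'); lra.
     * pose proof (HM u1' u1); lra.
 - intros u0 C u Hu. pose proof (CG _ C) as G0. destruct C as [[Hu0 Hu0'] _].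
   rewrite DP by lra. rewrite L_int; auto; try (unfold T in *; lra). rewrite G0. ring.
 - intros Hno u Hu. assert (G0 : 1 <= gg m tau b 0).
   { destruct (Rlt_le_dec (gg m tau b 0) 1) as [Hl|Hl]; auto. exfalso.
     destruct (L_exists m tau b 0 H ltac:(unfold T in *; lra) Hl) as [z [Hz Gz]]. apply Hno. exists z. split; auto.
     rewrite DP; auto. rewrite Gz; ring. }
   rewrite DP by lra. rewrite L_int; auto; try (unfold T in *; lra). pose proof (GM 0 u).
   pose proof (Rabs_maj2 (u - u * gg m tau b u)). nra.
 - intros Hs u Hu.
   assert (Hu2 : u^2 < tau m / 4) by nra.
   assert (Gu : gg m tau b u <= 3/2 * sum1 m (fun j => b j / sqrt (tau j))).
   { rewrite <- sum1_scal. unfold gg. apply sum1_le. intros j Hj. destruct H as [_ [_ H]]. destruct (H j Hj).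
     assert (0 < sqrt (tau j - u^2)) by (apply sqrt_lt_R0; nra).
     assert (0 < sqrt (tau j)) by (apply sqrt_lt_R0; lra).
     assert (sqrt (tau j) <= 3/2 * sqrt (tau j - u^2)).
     { rewrite <- (sqrt_square (3/2)) by lra. rewrite <- sqrt_mult by nra. apply sqrt_le_1_alt. nra. }
     set (p := sqrt (tau j - u^2)) in *. set (q := sqrt (tau j)) in *.
     replace (b j / p) with (b j * q * / (p * q)) by (field; lra).
     replace (3/2 * (b j / q)) with (3/2 * b j * p * / (p * q)) by (field; lra).
     apply Rmult_le_compat_r. apply Rlt_le, Rinv_0_lt_compat; nra. nra. }
   rewrite DP by lra. nra.
 - intros Hs u Hu. rewrite DP by lra.
   assert (gg m tau b 0 = sum1 m (fun j => b j / sqrt (tau j))).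
   { unfold gg. apply sum1_ext. intros. f_equal. f_equal. ring. }
   pose proof (GM 0 u). nra.
Qed.
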